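(* For $n\ge1$ let $$\Delta_n(t)=\sum_{k=0}^{n-1}(-1)^k(2k+1)\big(t^k+t^{2n-k}\big)+(-1)^n(2n+1)t^n,$$ the Alexander polynomial of the 2-bridge knot $K([\underbrace{2,\dots,2}_{n},\underbrace{-2,\dots,-2}_{n}])$. Then no zero of $\Delta_n$ has modulus $1$. Moreover: (1) if $n$ is odd, $\Delta_n$ has exactly two real zeros and all other zeros are non-real; (2) if $n$ is even, $\Delta_n$ has no real zeros. *)

(* Defs.v *)
From HB Require Import structures.
From mathcomp Require Import all_boot all_order all_algebra.
Set Implicit Arguments. Unset Strict Implicit. Unset Printing Implicit Defensive.
Import Order.TTheory GRing.Theory Num.Theory.
Local Open Scope ring_scope.

Definition Delta (R : nzRingType) (n : nat) : {poly R} :=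
  \sum_(k < n) (((-1) ^+ k * (2 * k + 1)%:R) *: ('X^k + 'X^(2 * n - k)))
  + ((-1) ^+ n * (2 * n + 1)%:R) *: 'X^n.

(* Main.v *)
Require Import Defs.
From HB Require Import structures.
From mathcomp Require Import all_boot all_order all_algebra.
From mathcomp.algebra_tactics Require Import ring.
From Stdlib Require Import Lia.
From mathcomp Require Import zify.
Import Order.TTheory GRing.Theory Num.Theory.
Local Open Scope ring_scope.

Section Alg.
Variable R : comNzRingType.

Lemma hornerDelta n (t : R) : (Delta R n).[t] =
  \sum_(k < n) ((-1) ^+ k * (2 * k + 1)%:R) * (t ^+ k + t ^+ (2 * n - k))
  + ((-1) ^+ n * (2 * n + 1)%:R) * t ^+ n.
Proof.
rewrite /Delta hornerD horner_sum hornerZ hornerXn; congr (_ + _).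
by apply: eq_bigr => k _; rewrite hornerZ hornerD !hornerXn.
Qed.

Lemma sumP n (t : R) : (t + 1) ^+ 2 * \sum_(k < n) ((-1) ^+ k * (2 * k + 1)%:R) * t ^+ k
  = 1 - t - (-1) ^+ n * (2 * n%:R + 1) * t ^+ n - (-1) ^+ n * (2 * n%:R - 1) * t ^+ n * t.
Proof.
elim: n => [|n IH]; first by rewrite big_ord0 !expr0; ring.
rewrite big_ord_recr /= mulrDr IH !exprS.
ring.
Qed.

Lemma sumQ n (t : R) : (t + 1) ^+ 2 * \sum_(k < n) ((-1) ^+ k * (2 * k + 1)%:R) * t ^+ (2 * n - k)
  = t ^+ n * t ^+ n * t * t - t ^+ n * t ^+ n * t
    - (-1) ^+ n * (2 * n%:R + 1) * t ^+ n * t * t - (-1) ^+ n * (2 * n%:R - 1) * t ^+ n * t.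
Proof.
elim: n => [|n IH]; first by rewrite big_ord0 !expr0; ring.
rewrite big_ord_recr /=.
have -> : \sum_(i < n) (-1) ^+ i * (2 * i + 1)%:R * t ^+ (2 * n.+1 - (widen_ord (leqnSn n) i))
   = (\sum_(i < n) (-1) ^+ i * (2 * i + 1)%:R * t ^+ (2 * n - i)) * (t * t).
  rewrite mulr_suml; apply: eq_bigr => i _ /=.
  have -> : (2 * n.+1 - i = (2 * n - i) + 2)%N.
    have := ltn_ord i; lia.
  by rewrite exprD expr2 !mulrA.
have -> : (2 * n.+1 - n = n + 2)%N by lia.
rewrite mulrDr mulrA IH !exprD !exprS expr0.
ring.
Qed.

Lemma DeltaE n (t : R) : (t + 1) ^+ 2 * (Delta R n).[t] =
  (t - 1) * (t ^+ n * t ^+ n * t - 1) + 4 * (-1) ^+ n * t ^+ n * t.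
Proof.
rewrite hornerDelta mulrDr.
under eq_bigr do rewrite mulrDr.
rewrite big_split /= mulrDr sumP sumQ.
ring.
Qed.
End Alg.

Section IVT.
Variable C : numClosedFieldType.

Lemma conjp_fix_div (q m : {poly C}) :
  m != 0 -> map_poly Num.conj m = m ->
  map_poly Num.conj (q * m) = q * m -> map_poly Num.conj q = q.
Proof.
move=> m0 hm; rewrite rmorphM /= hm => h; exact: (mulIf m0 h).
Qed.

Lemma ivt_step (q m : {poly C}) (a b : C) :
  0 < m.[a] * m.[b] -> (q * m).[a] * (q * m).[b] <= 0 -> q.[a] * q.[b] <= 0.
Proof.
move=> hm; rewrite !hornerM.
have -> : q.[a] * m.[a] * (q.[b] * m.[b]) = (q.[a] * q.[b]) * (m.[a] * m.[b]) by ring.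
by rewrite pmulr_lle0.
Qed.

Lemma ivtC (m : nat) (p : {poly C}) (a b : C) : (size p <= m)%N ->
  map_poly Num.conj p = p -> a \is Num.real -> b \is Num.real -> a <= b ->
  p.[a] * p.[b] <= 0 -> exists x, [/\ a <= x, x <= b & root p x].
Proof.
elim: m p => [|m IH] p hs hp ra rb hab hpab.
  have p0 : p = 0 by apply/eqP; rewrite -size_poly_eq0; rewrite -leqn0.
  by exists a; rewrite p0 root0 lexx.
have [s1|s2] := leqP (size p) 1.
  have [c pc] : exists c, p = c%:P by exists p`_0; exact: size1_polyC.
  have cr : c^* = c.
    by move: hp; rewrite pc map_polyC /= => /polyC_inj.
  move: hpab; rewrite pc !hornerC => hc.
  have c0 : c = 0.
    apply/eqP; rewrite -mul_conjC_eq0 cr eq_le hc /=.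
    by rewrite -{2}cr mul_conjC_ge0.
  by exists a; rewrite c0 rootC lexx.
have [z rz] : exists z, root p z by apply/closed_rootP; rewrite gtn_eqF.
have [q pq] := factor_theorem _ _ rz.
have q0 : q != 0 by apply: contraTneq s2 => q0; rewrite pq q0 mul0r size_poly0.
have sq : size p = (size q).+1.
  by rewrite pq size_Mmonic ?monicXsubC // size_XsubC addn2.
have mz : map_poly Num.conj ('X - z%:P) = 'X - (z^*)%:P.
  by rewrite rmorphB /= map_polyX map_polyC.
have [zr|znr] := boolP (z \is Num.real).
  have hq : map_poly Num.conj q = q.
    apply: (@conjp_fix_div _ ('X - z%:P)).
    - exact: monic_neq0 (monicXsubC z).
    - by rewrite mz conj_Creal.
    - by rewrite -pq.
  case: (boolP ((a <= z) && (z <= b))) => [/andP[hza hzb]|hout].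
    by exists z; rewrite hza hzb.
  have hpos : 0 < (a - z) * (b - z).
    move: hout; rewrite negb_and -(real_ltNge zr ra) -(real_ltNge rb zr) => /orP[haz|hbz].
      by rewrite mulr_gt0 // subr_gt0 // (lt_le_trans haz).
    have -> : (a - z) * (b - z) = (z - a) * (z - b) by ring.
    by rewrite mulr_gt0 // subr_gt0 // (le_lt_trans hab).
  have [x [h1 h2 h3]] : exists x, [/\ a <= x, x <= b & root q x].
    apply: (IH q) => //; first by rewrite -ltnS -sq.
    apply: (@ivt_step _ ('X - z%:P)); last by rewrite -pq.
    by rewrite !hornerXsubC.
  by exists x; rewrite h1 h2 pq rootM h3.
have hzc : z^* != z by rewrite -CrealE.
have rzc : root q (z^*).
  have : root p (z^*).
    by rewrite /root -{1}hp horner_map /= (eqP rz) conjC0.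
  by rewrite pq rootM root_XsubC (negbTE hzc) orbF.
have [r qr] := factor_theorem _ _ rzc.
have r0 : r != 0 by apply: contraNneq q0 => r0; rewrite qr r0 mul0r.
have sr : size q = (size r).+1.
  by rewrite qr size_Mmonic ?monicXsubC // size_XsubC addn2.
set M := ('X - (z^*)%:P) * ('X - z%:P).
have pM : p = r * M by rewrite pq qr /M mulrA.
have M0 : M != 0 by rewrite /M mulf_neq0 // monic_neq0 // monicXsubC.
have hM : map_poly Num.conj M = M.
  by rewrite /M rmorphM /= mz rmorphB /= map_polyX map_polyC /= conjCK mulrC.
have hr : map_poly Num.conj r = r by apply: (@conjp_fix_div r M M0 hM); rewrite -pM.
have Mpos x : x \is Num.real -> 0 < M.[x].
  move=> xr; rewrite /M hornerM !hornerXsubC.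
  have -> : x - z^* = (x - z)^* by rewrite rmorphB /= (conj_Creal xr).
  rewrite mulrC mul_conjC_gt0 subr_eq0; apply: contraNneq znr => <-; exact: xr.
have [x [h1 h2 h3]] : exists x, [/\ a <= x, x <= b & root r x].
  apply: (IH r) => //; first by move: hs; rewrite sq sr ltnS => /ltnW.
  apply: (@ivt_step _ M); first by rewrite mulr_gt0 ?Mpos.
  by rewrite -pM.
by exists x; rewrite h1 h2 pM rootM h3.
Qed.
End IVT.


Section Main.
Variable C : numClosedFieldType.
Set Implicit Arguments. Unset Strict Implicit.

Definition E n (t : C) := (t - 1) * (t ^+ n * t ^+ n * t - 1) + 4 * (-1) ^+ n * t ^+ n * t.

Lemma root_E n t : root (Delta C n) t -> E n t = 0.
Proof. by move=> /eqP h; rewrite /E -DeltaE h mulr0. Qed.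

Lemma E_root n t : t + 1 != 0 -> E n t = 0 -> root (Delta C n) t.
Proof.
move=> h1 h2; have : (t + 1) ^+ 2 * (Delta C n).[t] = 0 by rewrite DeltaE.
by move/eqP; rewrite mulf_eq0 expf_eq0 /= (negbTE h1).
Qed.

Lemma sign_sq k : (-1) ^+ k * (-1) ^+ k = 1 :> C.
Proof. by rewrite -exprMn mulrNN mulr1 expr1n. Qed.

Lemma Dneg n u : (1 <= n)%N -> 0 <= u -> 0 < (Delta C n).[- u].
Proof.
case: n => // n _ hu.
have key k : (k <= 2 * n.+1)%N ->
   (-1) ^+ k * (2 * k + 1)%:R * ((- u) ^+ k + (- u) ^+ (2 * n.+1 - k))
   = (2 * k + 1)%:R * (u ^+ k + u ^+ (2 * n.+1 - k)) :> C.
  move=> hk; rewrite [(- u) ^+ k]exprNn [(- u) ^+ (2 * n.+1 - k)]exprNn.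
  have -> : (-1) ^+ (2 * n.+1 - k) = (-1) ^+ k :> C.
    by rewrite -signr_odd oddB // oddM /= signr_odd.
  transitivity (((-1) ^+ k * (-1) ^+ k) * ((2 * k + 1)%:R * (u ^+ k + u ^+ (2 * n.+1 - k))) : C).
    ring.
  by rewrite sign_sq mul1r.
have nn k : (0 <= (2 * k + 1)%:R * (u ^+ k + u ^+ (2 * n.+1 - k)) :> C).
  by rewrite mulr_ge0 ?ler0n // addr_ge0 // exprn_ge0.
rewrite hornerDelta big_ord_recl /=.
rewrite addrC; apply: ltr_wpDl.
  have -> : (-1) ^+ n.+1 * (2 * n.+1 + 1)%:R * (- u) ^+ n.+1
     = ((-1) ^+ n.+1 * (-1) ^+ n.+1) * ((2 * n.+1 + 1)%:R * u ^+ n.+1) :> C.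
    rewrite [(- u) ^+ n.+1]exprNn; ring.
  by rewrite sign_sq mul1r mulr_ge0 ?ler0n // exprn_ge0.
rewrite addrC; apply: ltr_wpDl.
  apply: sumr_ge0 => i _; rewrite key; first exact: nn.
  by apply: leq_trans (ltnW (ltn_ord (lift ord0 i))) _; lia.
rewrite key //= expr0 mul1r.
by apply: ltr_pwDl; [exact: ltr01 | exact: exprn_ge0].
Qed.

Lemma circle_alg (t w T W s : C) : t * w = 1 -> T * W = 1 -> s * s = 1 ->
  (t - 1) * (T * T * t - 1) + 4 * s * T * t = 0 ->
  (- (s * T * t) - 1) * (- (s * W * w) - 1) + (s * T - 1) * (s * W - 1) = 0.
Proof.
move=> tw TW ss hE.
have hX : T * t - T - W + W * w + 4 * s = 0.
  have e1 : ((t - 1) * (T * T * t - 1) + 4 * s * T * t) * (W * w)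
      = (t - 1) * (T * (T * W) * (t * w) - W * w) + 4 * s * (T * W) * (t * w) by ring.
  rewrite TW tw in e1.
  have e2 : (t - 1) * (T * 1 * 1 - W * w) + 4 * s * 1 * 1 = T * t - T - (t * w) * W + W * w + 4 * s by ring.
  rewrite tw (mul1r W) in e2.
  by rewrite -e2 -e1 hE mul0r.
have -> : (- (s * T * t) - 1) * (- (s * W * w) - 1) + (s * T - 1) * (s * W - 1)
   = (s * s) * (T * W) * (t * w) + (s * s) * (T * W) + 2 + s * (T * t - T - W + W * w + 4 * s) - 4 * (s * s) by ring.
rewrite hX ss TW tw; ring.
Qed.

Lemma unit_circle n t : (1 <= n)%N -> root (Delta C n) t -> `|t| != 1.
Proof.
move=> hn hr; apply/negP => /eqP ht.
have hE := root_E hr.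
have tw : t * t^* = 1 by rewrite -normCK ht expr1n.
have TW : t ^+ n * (t^*) ^+ n = 1 by rewrite -exprMn tw expr1n.
have h := circle_alg tw TW (sign_sq n) hE.
set a := - ((-1) ^+ n * t ^+ n * t) - 1 in h.
set b := (-1) ^+ n * t ^+ n - 1 in h.
have ca : (- ((-1) ^+ n * t^* ^+ n * t^*) - 1) = a^*.
  by rewrite /a rmorphB rmorphN !rmorphM /= !rmorphXn /= conjCN1 rmorph1.
have cb : ((-1) ^+ n * t^* ^+ n - 1) = b^*.
  by rewrite /b rmorphB !rmorphM /= !rmorphXn /= conjCN1 rmorph1.
rewrite ca cb in h.
move/eqP: h; rewrite paddr_eq0 ?mul_conjC_ge0 // !mul_conjC_eq0 => /andP[/eqP ha0 /eqP hb0].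
have tm1 : t = -1.
  move: ha0 hb0; rewrite /a /b => /eqP; rewrite subr_eq0 => /eqP ha /eqP; rewrite subr_eq0 => /eqP hb.
  by move: ha; rewrite hb mul1r => /eqP; rewrite eqr_oppLR => /eqP.
have := Dneg hn ler01; rewrite -tm1 (eqP hr) ltxx //.
Qed.

Lemma even_noreal n t : (1 <= n)%N -> ~~ odd n -> root (Delta C n) t -> t \is Num.real -> False.
Proof.
move=> hn hodd hr tr.
have hs : (-1) ^+ n = 1 :> C by rewrite -signr_odd (negbTE hodd).
have [tle0|tgt0] := real_leP tr (real0 C).
  have := Dneg hn (u := - t); rewrite opprK oppr_ge0 (eqP hr) ltxx => /(_ tle0); done.
have hE := root_E hr; move: hE; rewrite /E hs => /eqP; apply/negP.
rewrite gt_eqF //; apply: ltr_wpDl; last first.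
  by rewrite mulr1 !mulr_gt0 ?ltr0n // exprn_gt0.
have e : t ^+ n * t ^+ n * t = t ^+ (n + n).+1 by rewrite exprS exprD mulrC.
rewrite e; have [t1|t1] := real_leP tr (real1 C).
  by apply: mulr_le0; rewrite subr_le0 //; exact: exprn_ile1 (ltW tgt0) t1.
by apply: mulr_ge0; rewrite subr_ge0; [exact: ltW | exact: exprn_ege1 (ltW t1)].
Qed.

Definition H n (t : C) := (t - 1) * (t ^+ n - (t ^+ n * t)^-1).

Lemma E_H n t : (-1) ^+ n = -1 :> C -> 0 < t -> E n t = 0 -> H n t = 4.
Proof.
move=> hs t0 hE.
have T0 : t ^+ n * t != 0 by rewrite mulf_neq0 // ?expf_neq0 // gt_eqF.
apply: (mulfI T0).
have e1 : (t ^+ n * t) * H n t = (t - 1) * (t ^+ n * t ^+ n * t - 1).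
  by rewrite /H mulrCA mulrBr (mulfV T0); ring.
rewrite e1.
transitivity (E n t + (t ^+ n * t) * 4); last by rewrite hE add0r.
by rewrite /E hs; ring.
Qed.

Lemma H_mono n x y : 1 < x -> x < y -> H n x < H n y.
Proof.
move=> hx hxy.
have x0 : 0 < x := lt_trans ltr01 hx.
have hy : 1 < y := lt_trans hx hxy.
have y0 : 0 < y := lt_trans ltr01 hy.
have xn : x \is Num.nneg by rewrite nnegrE ltW.
have yn : y \is Num.nneg by rewrite nnegrE ltW.
have A0 : 0 < x ^+ n - (x ^+ n * x)^-1.
  rewrite subr_gt0; apply: (@lt_le_trans _ _ 1).
    by rewrite invf_lt1 ?mulr_gt0 ?exprn_gt0 // -exprSr (exprn_egte1 _).2.
  by rewrite exprn_ege1 // ltW.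
have AB : x ^+ n - (x ^+ n * x)^-1 <= y ^+ n - (y ^+ n * y)^-1.
  apply: lerB; first exact: (lerXn2r n xn yn (ltW hxy)).
  rewrite lef_pV2 ?posrE ?mulr_gt0 ?exprn_gt0 // -!exprSr.
  exact: (lerXn2r n.+1 xn yn (ltW hxy)).
rewrite /H; apply: (@lt_le_trans _ _ ((y - 1) * (x ^+ n - (x ^+ n * x)^-1))).
  by rewrite ltr_pM2r // ltrD2r.
by rewrite ler_pM2l // subr_gt0.
Qed.

Lemma E_inv n t : t != 0 -> E n (t^-1) * (t ^+ n * t ^+ n * t * t) = E n t.
Proof.
move=> t0.
have wt : t^-1 * t = 1 by rewrite mulVf.
have WT : t^-1 ^+ n * t ^+ n = 1 by rewrite -exprMn wt expr1n.
rewrite /E.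
have -> : ((t^-1 - 1) * (t^-1 ^+ n * t^-1 ^+ n * t^-1 - 1) + 4 * (-1) ^+ n * t^-1 ^+ n * t^-1)
   * (t ^+ n * t ^+ n * t * t)
  = ((t^-1 * t) - t) * ((t^-1 ^+ n * t ^+ n) * (t^-1 ^+ n * t ^+ n) * (t^-1 * t) - t ^+ n * t ^+ n * t)
    + 4 * (-1) ^+ n * ((t^-1 ^+ n * t ^+ n) * (t^-1 * t)) * (t ^+ n * t) by ring.
rewrite WT wt; ring.
Qed.

Lemma E_uniq n x y : (-1) ^+ n = -1 :> C -> 1 < x -> 1 < y -> E n x = 0 -> E n y = 0 -> x = y.
Proof.
move=> hs hx hy ex ey.
have hHx := E_H hs (lt_trans ltr01 hx) ex.
have hHy := E_H hs (lt_trans ltr01 hy) ey.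
have xr : x \is Num.real by rewrite ger1_real // ltW.
have yr : y \is Num.real by rewrite ger1_real // ltW.
case: (real_ltgtP xr yr) => // h.
  by have := H_mono n hx h; rewrite hHx hHy ltxx.
by have := H_mono n hy h; rewrite hHx hHy ltxx.
Qed.

Definition Ep n : {poly C} :=
  ('X - 1) * ('X ^+ n * 'X ^+ n * 'X - 1) + (4 * (-1) ^+ n) *: ('X ^+ n * 'X).

Lemma Ep_horner n t : (Ep n).[t] = E n t.
Proof. by rewrite /Ep /E !hornerE. Qed.

Lemma Ep_conj n : map_poly Num.conj (Ep n) = Ep n.
Proof.
rewrite /Ep rmorphD !rmorphM !rmorphB /= rmorph1 map_polyX map_polyZ /= !rmorphM /= map_polyXn map_polyX.
by rewrite rmorphXn /= conjCN1 geC0_conj.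
Qed.

End Main.

Theorem theoremC4 (C : numClosedFieldType) (n : nat) (hn : (1 <= n)%N) :
  (forall z : C, root (Delta C n) z -> `|z| != 1) /\
  (odd n -> exists a b : C,
     [/\ a != b, a \is Num.real /\ b \is Num.real,
         root (Delta C n) a /\ root (Delta C n) b &
         forall z : C, root (Delta C n) z -> z \is Num.real -> z = a \/ z = b]) /\
  (~~ odd n -> forall z : C, root (Delta C n) z -> z \notin Num.real).
Proof.
split; [|split].
- by move=> z hz; exact: unit_circle hn hz.
- move=> hodd.
  have hs : (-1) ^+ n = -1 :> C by rewrite -signr_odd hodd expr1.
  have E1 : E n (1 : C) = -4 by rewrite /E hs !expr1n; ring.
  have M4 : (4 <= 4 ^ n)%N by rewrite -{1}(expn1 4) leq_pexp2l.
  have E4 : 0 < E n (4 : C).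
    have -> : E n (4 : C) = ((12 * 4 ^ n * 4 ^ n)%:R - (16 * 4 ^ n + 3)%:R : C).
      by rewrite /E hs -natrX; ring.
    rewrite subr_gt0 ltr_nat; nia.
  have r4 : (4 : C) \is Num.real by apply: ger0_real; rewrite ler0n.
  have h14 : (1 : C) <= 4 by rewrite (ler_nat C 1 4).
  have [r [hr1 hr4 hr]] := ivtC C (size (Ep C n)) (Ep C n) 1 4 (leqnn _) (Ep_conj C n) (real1 C) r4 h14
     (ltac:(rewrite !Ep_horner E1; apply: mulr_le0_ge0; [by rewrite oppr_le0 ler0n | exact: ltW])).
  have Er : E n r = 0 by move: hr; rewrite /root Ep_horner => /eqP.
  have hr1' : 1 < r.
    rewrite lt_neqAle hr1 andbT; apply/negP => /eqP r1.
    by move: Er; rewrite -r1 E1 => /eqP; rewrite oppr_eq0 pnatr_eq0.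
  have r0 : 0 < r := lt_trans ltr01 hr1'.
  have Dr : root (Delta C n) r by apply: E_root => //; rewrite gt_eqF // addr_gt0.
  have Einv (z : C) : 0 < z -> E n z = 0 -> E n z^-1 = 0.
    move=> z0 Ez; have := E_inv n (lt0r_neq0 z0); rewrite Ez => /eqP.
    rewrite mulf_eq0 (negbTE (_ : z ^+ n * z ^+ n * z * z != 0)) ?orbF; first by move/eqP.
    by rewrite !mulf_neq0 // ?expf_neq0 // gt_eqF.
  have ri0 : 0 < r^-1 by rewrite invr_gt0.
  have Dri : root (Delta C n) r^-1.
    by apply: E_root; [rewrite gt_eqF // addr_gt0 | exact: Einv].
  exists r, r^-1; split.
  + by rewrite gt_eqF // (lt_trans _ hr1') // invf_lt1.
  + by split; apply: ger0_real; apply: ltW.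
  + by split.
  + move=> z hz zr.
    have [zle0|z0] := real_leP zr (real0 C).
      have := Dneg hn (u := - z); rewrite opprK oppr_ge0 (eqP hz) ltxx => /(_ zle0); done.
    have Ez := root_E hz.
    case: (real_ltgtP zr (real1 C)) => hz1.
    * right; have hzi : 1 < z^-1 by rewrite invf_gt1.
      have := E_uniq hs hzi hr1' (Einv z z0 Ez) Er.
      by move=> <-; rewrite invrK.
    * by left; exact: E_uniq hs hz1 hr1' Ez Er.
    * by move: Ez; rewrite hz1 E1 => /eqP; rewrite oppr_eq0 pnatr_eq0.
- move=> heven z hz; apply/negP => zr; exact: even_noreal hn heven hz zr.
Qed.
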